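(* The set $\widehat{M}_V$ of pricing measures with finite loss-entropy is convex.
   Context: Let $(\Omega,\mathcal{F},\mathbb{P})$ be a probability space and $K\subseteq L^0(\mathbb{P})$ a convex cone (of terminal wealths). Let $a\in[-\infty,\infty)$ and $U:(a,\infty)\to\mathbb{R}$ be increasing, strictly concave, continuously differentiable with $\lim_{x\downarrow a}U'(x)=\infty$ and $\lim_{x\uparrow\infty}U'(x)=0$; if $a=-\infty$, assume moreover $\liminf_{x\to-\infty}\frac{xU'(x)}{U(x)}>1$. Let $V(y)=\sup_{x\in(a,\infty)}\{U(x)-xy\}$ for $y>0$ and $V^+=\max\{V,0\}$. Define $M_1=\{\mathbb{Q}\ll\mathbb{P}: X\in L^1(\mathbb{Q})\text{ and }\mathbb{E}_{\mathbb{Q}}[X]\le 0\text{ for all }X\in K\}$. A measure $\mathbb{Q}\ll\mathbb{P}$ has finite loss-entropy if there is a constant $b>0$ with $\mathbb{E}_{\mathbb{P}}\big[V^+\big(\tfrac{d\mathbb{Q}}{d\mathbb{P}}\big)\mathbf{1}_{\{d\mathbb{Q}/d\mathbb{P}\ge b\}}\big]<\infty$. Set $\widehat{M}_V=\{\mathbb{Q}\in M_1:\mathbb{Q}\text{ has finite loss-entropy}\}$. *)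

(* Defs.v *)
From mathcomp Require Import all_boot all_order all_algebra.
From mathcomp Require Import all_classical all_reals all_analysis.
Set Implicit Arguments. Unset Strict Implicit. Unset Printing Implicit Defensive.
Import Order.TTheory GRing.Theory Num.Theory.
Import numFieldNormedType.Exports.
Local Open Scope classical_set_scope.
Local Open Scope ring_scope.

Definition dom_a (R : realType) (a : \bar R) : set R := [set x | (a < x%:E)%E].

Definition to_a (R : realType) (a : \bar R) : set_system R :=
  match a with
  | EFin r => r^'+
  | _ => ninfty_nbhs R
  end.

Definition utility (R : realType) (a : \bar R) (U : R -> R) : Prop :=
  (a < +oo)%E /\
  [/\
      (forall x y, dom_a a x -> dom_a a y -> x < y -> U x < U y),
      (forall x y t, dom_a a x -> dom_a a y -> x != y -> 0 < t -> t < 1 ->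
         t * U x + (1 - t) * U y < U (t * x + (1 - t) * y)),
      (forall x, dom_a a x -> derivable U x 1) /\
        (forall x, dom_a a x -> (derive1 U y @[y --> x] --> derive1 U x)),
      ((derive1 U x)%:E @[x --> to_a a] --> +oo%E) /\
        (derive1 U x @[x --> +oo] --> (0:R))
    & (* asymptotic elasticity condition when a = -oo:
         liminf_{x -> -oo} x U'(x) / U(x) > 1 *)
      (a = -oo%E ->
        exists2 c : R, 1 < c &
          \forall x \near ninfty_nbhs R, c <= x * derive1 U x / U x)].

Definition conjV (R : realType) (a : \bar R) (U : R -> R) (y : R) : \bar R :=
  ereal_sup [set ((U x - x * y)%:E) | x in dom_a a].

Definition conjVplus (R : realType) (a : \bar R) (U : R -> R) (y : R) : \bar R :=
  Order.max (conjV a U y) 0%E.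

Definition convex_cone_L0 d (T : measurableType d) (R : realType)
  (K : set (T -> R)) : Prop :=
  [/\ (forall X, K X -> measurable_fun setT X),
      (forall X lam, K X -> 0 <= lam -> K (fun w => lam * X w))
    & (forall X Y t, K X -> K Y -> 0 <= t -> t <= 1 ->
         K (fun w => t * X w + (1 - t) * Y w))].

Definition M1 d (T : measurableType d) (R : realType)
  (P : probability T R) (K : set (T -> R)) (Q : probability T R) : Prop :=
  Q `<< P /\
  forall X, K X ->
    Q.-integrable setT (fun w => (X w)%:E) /\
    (\int[Q]_w (X w)%:E <= 0)%E.

Definition is_density d (T : measurableType d) (R : realType)
  (P Q : probability T R) (Z : T -> R) : Prop :=
  [/\ measurable_fun setT Z, (forall w, 0 <= Z w)
    & forall A, measurable A -> Q A = (\int[P]_(w in A) (Z w)%:E)%E].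

Definition finite_loss_entropy d (T : measurableType d) (R : realType)
  (a : \bar R) (U : R -> R) (P Q : probability T R) : Prop :=
  exists Z, is_density P Q Z /\
    exists2 b : R, 0 < b &
      (\int[P]_(w in [set w | (b <= Z w)%R]) conjVplus a U (Z w) < +oo)%E.

Definition MhatV d (T : measurableType d) (R : realType)
  (a : \bar R) (U : R -> R) (P : probability T R) (K : set (T -> R))
  (Q : probability T R) : Prop :=
  M1 P K Q /\ finite_loss_entropy a U P Q.

(* Main.v *)
Set Warnings "-all".
Require Import Defs.
Set Warnings "-all".
From mathcomp Require Import all_boot all_order all_algebra.
From mathcomp Require Import all_classical all_reals all_analysis.
From mathcomp Require Import measurable_realfun lebesgue_integral.
From mathcomp Require Import ring lra.
Import Order.TTheory GRing.Theory Num.Theory.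
Import numFieldNormedType.Exports.
Local Open Scope classical_set_scope.
Local Open Scope ring_scope.

Section S.
Context (R : realType) (a : \bar R) (U : R -> R).

Lemma conjV_between c y m : c <= y -> y <= m ->
  (conjV a U y <= Order.max (conjV a U c) (conjV a U m))%E.
Proof.
move=> cy ym; apply: ge_ereal_sup => _ [x dx <-].
have [x0|x0] := leP 0 x.
- rewrite le_max; apply/orP; left; apply: le_trans (ereal_sup_ubound _); last first.
    by exists x.
  by rewrite lee_fin lerD2l lerN2 ler_wpM2l.
- rewrite le_max; apply/orP; right; apply: le_trans (ereal_sup_ubound _); last first.
    by exists x.
  by rewrite lee_fin lerD2l lerN2 ler_wnM2l // ltW.
Qed.

Lemma conjV_lsc : lower_semicontinuous (conjV a U).
Proof.
move=> y r /ereal_sup_gt [_ [x dx <-]]; rewrite lte_fin => rlt.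
exists [set y' | r < U x - x * y'].
  have cv : (fun y' => U x - x * y') @ y --> U x - x * y.
    apply: cvgB; first exact: cvg_cst.
    by apply: cvgMr; exact: cvg_id.
  exact: (cvgr_gt _ cv _ rlt).
move=> y' /= ry'; apply: lt_le_trans (ereal_sup_ubound _); last by exists x.
by rewrite lte_fin.
Qed.

Lemma conjVplus_measurable : measurable_fun [set: R] (fun y : R => conjVplus a U y).
Proof.
apply: measurable_maxe => //.
exact: lower_semicontinuous_measurable conjV_lsc.
Qed.
End S.
Arguments conjV_between {R a U c y m}.

Section Mix.
Context (d : measure_display) (T : measurableType d) (R : realType).
Local Open Scope ereal_scope.

Lemma mix_ge0_integral (Q1 Q2 Q : probability T R) (t : R) :
  (0 <= t)%R -> (t <= 1)%R ->
  (forall A, measurable A -> Q A = (t%:E * Q1 A + (1 - t)%:E * Q2 A)%E) ->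
  forall f : T -> \bar R, measurable_fun setT f -> (forall x, 0 <= f x) ->
  \int[Q]_x f x = t%:E * \int[Q1]_x f x + (1 - t)%:E * \int[Q2]_x f x.
Proof.
move=> t0 t1 hQ f mf f0.
have s0 : (0 <= 1 - t)%R by rewrite subr_ge0.
rewrite (eq_measure_integral (measure_add (mscale (NngNum t0) Q1) (mscale (NngNum s0) Q2))); last first.
  move=> A mA _; transitivity (t%:E * Q1 A + (1 - t)%:E * Q2 A); first exact: hQ.
  by rewrite /measure_add/= /msum 2!big_ord_recl/= big_ord0 adde0.
rewrite (ge0_integral_measure_add _ _ measurableT) //.
by rewrite !ge0_integral_mscale.
Qed.

End Mix.
Arguments mix_ge0_integral {d T R Q1 Q2 Q t}.

Lemma mix_le0 (R : realType) (t : R) (p1 n1 p2 n2 iP iN : \bar R) :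
  (0 <= t)%R -> (t <= 1)%R ->
  p1 \is a fin_num -> n1 \is a fin_num -> p2 \is a fin_num -> n2 \is a fin_num ->
  iP = (t%:E * p1 + (1 - t)%:E * p2)%E -> iN = (t%:E * n1 + (1 - t)%:E * n2)%E ->
  (p1 - n1 <= 0)%E -> (p2 - n2 <= 0)%E -> (iP - iN <= 0)%E.
Proof.
move=> t0 t1 /fineK <- /fineK <- /fineK <- /fineK <- -> ->.
rewrite -!EFinM -!EFinD !lee_fin => h1 h2.
nra.
Qed.
Arguments mix_le0 {R t p1 n1 p2 n2 iP iN}.

Theorem lemma3p3 (d : measure_display) (T : measurableType d) (R : realType)
  (P : probability T R) (K : set (T -> R)) (a : \bar R) (U : R -> R) :
  convex_cone_L0 K -> utility a U ->
  forall (Q1 Q2 Q : probability T R) (t : R),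
    MhatV a U P K Q1 -> MhatV a U P K Q2 -> 0 <= t -> t <= 1 ->
    (forall A, measurable A -> Q A = (t%:E * Q1 A + (1 - t)%:E * Q2 A)%E) ->
    MhatV a U P K Q.
Proof.
move=> _ _ Q1 Q2 Q t [[dom1 K1] [Z1 [[mZ1 Z10 hZ1] [b1 b10 I1]]]]
  [[dom2 K2] [Z2 [[mZ2 Z20 hZ2] [b2 b20 I2]]]] t0 t1 hQ.
have s0 : 0 <= 1 - t by rewrite subr_ge0.
split; [split|].
- move=> N NP A mA AN.
  transitivity (t%:E * Q1 A + (1 - t)%:E * Q2 A)%E; first exact: hQ.
  by rewrite (dom1 N NP A mA AN) (dom2 N NP A mA AN) !mule0 adde0.
- move=> X KX; have [iX1 le1] := K1 X KX; have [iX2 le2] := K2 X KX.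
  have mX : measurable_fun setT (fun w => (X w)%:E) by case/integrableP: iX1.
  split.
  + apply/integrableP; split => //.
    rewrite (mix_ge0_integral t0 t1 hQ); last 2 first.
    * exact: measurableT_comp mX.
    * by move=> x.
    have f1 : (\int[Q1]_x `|(X x)%:E|)%E \is a fin_num.
      by rewrite ge0_fin_numE ?integral_ge0 //; case/integrableP: iX1.
    have f2 : (\int[Q2]_x `|(X x)%:E|)%E \is a fin_num.
      by rewrite ge0_fin_numE ?integral_ge0 //; case/integrableP: iX2.
    rewrite -ge0_fin_numE; last first.
      by rewrite adde_ge0 // mule_ge0 // ?lee_fin // integral_ge0.
    by rewrite fin_numD !fin_numM.
  + rewrite integralE in le1; rewrite integralE in le2; rewrite integralE.
    have eN := mix_ge0_integral t0 t1 hQ (funeneg (fun x => (X x)%:E))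
      (measurable_funeneg mX) (@funeneg_ge0 _ _ (fun x => (X x)%:E)).
    have eP := mix_ge0_integral t0 t1 hQ (funepos (fun x => (X x)%:E))
      (measurable_funepos mX) (@funepos_ge0 _ _ (fun x => (X x)%:E)).
    apply: (mix_le0 t0 t1 _ _ _ _ eP eN le1 le2).
    * exact: (integrable_pos_fin_num measurableT iX1).
    * exact: (integrable_neg_fin_num measurableT iX1).
    * exact: (integrable_pos_fin_num measurableT iX2).
    * exact: (integrable_neg_fin_num measurableT iX2).
- exists (fun w => t * Z1 w + (1 - t) * Z2 w); split.
  + split.
    * apply: measurable_funD; apply: measurable_funM => //; exact: measurable_cst.
    * by move=> w; rewrite addr_ge0 // mulr_ge0.
    * move=> A mA.
      transitivity (t%:E * Q1 A + (1 - t)%:E * Q2 A)%E; first exact: hQ.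
      rewrite hZ1 // hZ2 //.
      under [RHS]eq_integral do rewrite EFinD !EFinM.
      rewrite ge0_integralD //; last 4 first.
      * by move=> x _; rewrite mule_ge0 // lee_fin.
      * apply: emeasurable_funM; first exact: measurable_cst.
        exact/measurable_EFinP/measurable_funTS.
      * by move=> x _; rewrite mule_ge0 // lee_fin.
      * apply: emeasurable_funM; first exact: measurable_cst.
        exact/measurable_EFinP/measurable_funTS.
      rewrite ge0_integralZl_EFin //; last 2 first.
      * by move=> x _; rewrite lee_fin.
      * exact/measurable_EFinP/measurable_funTS.
      rewrite ge0_integralZl_EFin //.
      * by move=> x _; rewrite lee_fin.
      * exact/measurable_EFinP/measurable_funTS.
  + set Z := fun w => t * Z1 w + (1 - t) * Z2 w.
    set Vp := conjVplus a U.
    have Vp0 y : (0 <= Vp y)%E by rewrite /Vp /conjVplus le_max lexx orbT.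
    have mVp : measurable_fun [set: R] Vp := conjVplus_measurable R a U.
    have mZ : measurable_fun setT Z.
      by apply: measurable_funD; apply: measurable_funM => //; exact: measurable_cst.
    pose b0 := Num.max b1 b2.
    have [C [b [C0 Cfin b0b hb]]] : exists C : \bar R, exists b : R,
      [/\ (0 <= C)%E, (C < +oo)%E, b0 <= b &
        forall y m, b <= y -> y <= m -> (Vp y <= C + Vp m)%E].
      have [[c [b0c Vc]]|noc] := pselect (exists c, b0 <= c /\ (Vp c < +oo)%E).
      * exists (Vp c), c; split; [exact: Vp0|by []|by []|move=> y m cy ym].
        rewrite /Vp /conjVplus ge_max; apply/andP; split; last first.
          exact: adde_ge0 (Vp0 c) (Vp0 m).
        apply: le_trans (conjV_between cy ym) _.
        rewrite ge_max; apply/andP; split.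
          apply: le_trans (leeDl _ (Vp0 m)).
          by rewrite /Vp /conjVplus le_max lexx.
        apply: le_trans (leeDr _ (Vp0 c)).
        by rewrite /Vp /conjVplus le_max lexx.
      * exists 0%E, b0; split => // y m b0y ym.
        have -> : Vp m = +oo%E.
          apply/eqP; rewrite eq_le leey /= leNgt; apply/negP => Vm.
          by apply: noc; exists m; split => //; exact: le_trans ym.
        by rewrite add0e leey.
    have b1b : b1 <= b by apply: le_trans b0b; rewrite le_max lexx.
    have b2b : b2 <= b by apply: le_trans b0b; rewrite le_max lexx orbT.
    exists b; first exact: lt_le_trans b1b.
    have mset (f : T -> R) (c : R) : measurable_fun setT f ->
        measurable [set w | c <= f w].
      move=> mf; have := mf measurableT _ (measurable_itv `[c, +oo[).
      rewrite setTI; congr measurable; apply/seteqP; split => w /=;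
        by rewrite in_itv /= andbT.
    have mS := mset Z b mZ.
    have mS1 := mset Z1 b1 mZ1.
    have mS2 := mset Z2 b2 mZ2.
    pose g1 := (fun w => Vp (Z1 w)) \_ [set w | b1 <= Z1 w].
    pose g2 := (fun w => Vp (Z2 w)) \_ [set w | b2 <= Z2 w].
    have g10 w : (0 <= g1 w)%E.
      by rewrite /g1 /restrict /patch; case: ifP.
    have g20 w : (0 <= g2 w)%E.
      by rewrite /g2 /restrict /patch; case: ifP.
    have mg1 : measurable_fun setT g1.
      apply/(measurable_restrictT _ mS1).
      exact: measurable_funTS (measurableT_comp mVp mZ1).
    have mg2 : measurable_fun setT g2.
      apply/(measurable_restrictT _ mS2).
      exact: measurable_funTS (measurableT_comp mVp mZ2).
    have pw w : b <= Z w -> (Vp (Z w) <= C + (g1 w + g2 w))%E.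
      move=> bZ.
      have Zle : Z w <= Num.max (Z1 w) (Z2 w).
        rewrite /Z; set M := Num.max _ _.
        have h1 : Z1 w <= M by rewrite le_max lexx.
        have h2 : Z2 w <= M by rewrite le_max lexx orbT.
        have -> : M = t * M + (1 - t) * M by ring.
        by apply: lerD; apply: ler_wpM2l.
      apply: le_trans (hb _ _ bZ Zle) _.
      apply: leeD => //.
      have [Z12|Z21] := leP (Z1 w) (Z2 w).
      + apply: le_trans (leeDr _ (g10 w)).
        rewrite /g2 /restrict /patch mem_set //=.
        apply: le_trans b2b _; apply: le_trans bZ _.
        by apply: le_trans Zle _; rewrite (max_idPr Z12).
      + apply: le_trans (leeDl _ (g20 w)).
        rewrite /g1 /restrict /patch mem_set //=.
        apply: le_trans b1b _; apply: le_trans bZ _.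
        by apply: le_trans Zle _; rewrite (max_idPl (ltW Z21)).
    apply: le_lt_trans.
      apply: (ge0_le_integral P mS) => //.
      * exact: measurable_funTS (measurableT_comp mVp mZ).
      * apply: emeasurable_funD; first exact: measurable_cst.
        exact: measurable_funTS (emeasurable_funD mg1 mg2).
      * exact: pw.
    rewrite (ge0_integralD P mS (fun x _ => C0) (measurable_cst _) _
      (measurable_funTS (emeasurable_funD mg1 mg2))); last first.
      by move=> x _; rewrite adde_ge0.
    rewrite (ge0_integralD P mS (fun x _ => g10 x) (measurable_funTS mg1)
      (fun x _ => g20 x) (measurable_funTS mg2)).
    rewrite integral_cst //.
    have Ig1 : (\int[P]_(x in [set w | (b <= Z w)%R]) g1 x < +oo)%E.
      apply: le_lt_trans I1.
      rewrite [leRHS]integral_mkcond.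
      exact: (ge0_subset_integral P mS measurableT).
    have Ig2 : (\int[P]_(x in [set w | (b <= Z w)%R]) g2 x < +oo)%E.
      apply: le_lt_trans I2.
      rewrite [leRHS]integral_mkcond.
      exact: (ge0_subset_integral P mS measurableT).
    apply: lte_add_pinfty; last exact: lte_add_pinfty.
    rewrite -ge0_fin_numE; last by rewrite mule_ge0.
    rewrite fin_numM // ?ge0_fin_numE //.
    by apply: le_lt_trans (probability_le1 P mS) _; rewrite ltey.
Qed.
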